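(* Fix $k\ge1$, an index $1\le i\le k$, and constants $a,b,c\ge0$. For each $n$ let $(X_1,\dots,X_k)$ be an interval partition of $[n]$ and let $\phi$ be a labeling of the pairs of $[n]$ as described in the context. If $|X_{i-1}|=(a+o(1))n$, $|X_i|=(b+o(1))n$ and $|X_{i+1}|=(c+o(1))n$ as $n\to\infty$, then the number of bad triples $u<v<w$ with $v\in X_i$ is $\left[(a+b)b(b+c)+o(1)\right]\binom{n}{3}$.
   Context: An interval partition $(X_1,\dots,X_k)$ of $[n]$ is a sequence of disjoint (possibly empty) intervals of $[n]$ with union $[n]$ and $X_p<X_q$ (every element of $X_p$ below every element of $X_q$) for $p<q$; by convention $X_0=X_{k+1}=\emptyset$. For $u\in X_p$, the fractional index of $u$ in $X_p$ is $\lambda_u=(u+1-\min X_p)/|X_p|\in(0,1]$. The labeling $\phi$ of pairs $u<v$ with $u\in X_p$, $v\in X_q$ is defined by: if $p=q$ then $\phi(uv)=p$; if $q-p\ge2$ then $\phi(uv)$ is some integer with $p<\phi(uv)<q$; if $q=p+1$ then $\phi(uv)=p$ when $\lambda_u+\lambda_v\le1$ and $\phi(uv)=p+1$ when $\lambda_u+\lambda_v>1$. A triple $u<v<w$ is good if $\phi(uv)<\phi(vw)$ and bad otherwise. *)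

(* Defs.v *)
From mathcomp Require Import all_boot all_order all_algebra.
From mathcomp Require Import all_classical all_reals all_analysis.
Set Implicit Arguments. Unset Strict Implicit. Unset Printing Implicit Defensive.
Import Order.TTheory GRing.Theory Num.Theory.

(* Ground set [n] = {1,...,n}.  A family of parts is X : nat -> nat -> bool,
   X p u = "u belongs to X_p".  Indices p outside 1..k give empty parts
   (convention X_0 = X_{k+1} = emptyset). *)

Definition is_interval (A : nat -> bool) : Prop :=
  forall x y z, x <= y -> y <= z -> A x -> A z -> A y.

Definition interval_partition (n k : nat) (X : nat -> nat -> bool) : Prop :=
  [/\ (forall p, 1 <= p <= k -> is_interval (X p)),
      (forall p u, X p u -> (1 <= p <= k) /\ (1 <= u <= n)),
      (forall u, 1 <= u <= n -> exists p, X p u),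
      (forall p q u, X p u -> X q u -> p = q) &
      (forall p q u v, p < q -> X p u -> X q v -> u < v)].

Definition part_size (n : nat) (X : nat -> nat -> bool) (p : nat) : nat :=
  count (X p) (iota 1 n).

Definition part_min (n : nat) (X : nat -> nat -> bool) (p : nat) : nat :=
  head 0 (seq.filter (X p) (iota 1 n)).

Definition frac_index (n : nat) (X : nat -> nat -> bool) (p u : nat) : rat :=
  ((u.+1 - part_min n X p)%:R / (part_size n X p)%:R)%R.

Definition labeling (n k : nat) (X : nat -> nat -> bool)
    (phi : nat -> nat -> nat) : Prop :=
  forall u v p q, 1 <= u -> u < v -> v <= n -> X p u -> X q v ->
    [/\ (p = q -> phi u v = p),
        (p.+2 <= q -> p < phi u v < q) &
        (q = p.+1 ->
           phi u v = if (frac_index n X p u + frac_index n X q v <= 1)%R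
                     then p else p.+1)].

Definition bad (phi : nat -> nat -> nat) (u v w : nat) : bool :=
  ~~ (phi u v < phi v w).

Definition nbad_mid (n : nat) (X : nat -> nat -> bool)
    (phi : nat -> nat -> nat) (i : nat) : nat :=
  \sum_(1 <= u < n.+1) \sum_(u.+1 <= v < n.+1) \sum_(v.+1 <= w < n.+1)
     (X i v && bad phi u v w).

(* Main.v *)
Require Import Defs.
From mathcomp Require Import all_boot all_order all_algebra.
From mathcomp Require Import all_classical all_reals all_analysis.
From mathcomp Require Import zify ring lra.
Import Order.TTheory GRing.Theory Num.Theory.
Set Implicit Arguments. Unset Strict Implicit. Unset Printing Implicit Defensive.

Lemma iv_all n k X : interval_partition n k X -> forall p, Defs.is_interval (X p).
Proof.
case=> h1 h2 _ _ _ p.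
case: (boolP (1 <= p <= k)) => hp; first exact: h1.
move=> x y z _ _ /h2 [] hp'; by rewrite hp' in hp.
Qed.

Lemma filter_iota_interval S : Defs.is_interval S -> forall len a,
  seq.filter S (iota a len) = iota (head 0 (seq.filter S (iota a len))) (count S (iota a len)).
Proof.
move=> hS; elim=> [//|len IH] a.
rewrite /= IH.
case: (boolP (S a)) => Sa /=; last by rewrite add0n -IH.
rewrite ?add0n ?add1n; congr (_ :: _).
move: (IH a.+1); set h := head 0 _; set c := count S _ => e.
case Ec: c e => [//|c'] e.
have hin : h \in seq.filter S (iota a.+1 len) by rewrite e mem_iota; lia.
rewrite mem_filter mem_iota in hin; case/and3P: hin => Sh h1 h2.
have Sa1 : S a.+1 by apply: (hS a a.+1 h) => //; lia.
have : a.+1 \in seq.filter S (iota a.+1 len) by rewrite mem_filter Sa1 mem_iota; lia.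
rewrite e inE mem_iota => /orP[/eqP -> //|]; lia.
Qed.

Lemma memX n k X : interval_partition n k X -> forall p u,
  X p u = (part_min n X p <= u < part_min n X p + part_size n X p).
Proof.
move=> hP p u.
have e := filter_iota_interval (@iv_all n k X hP p) n 1.
rewrite -[_ <= u < _]mem_iota /part_min /part_size -e mem_filter mem_iota.
case: (boolP (X p u)) => //= Xu.
case: hP => _ h2 _ _ _; case: (h2 _ _ Xu) => _; lia.
Qed.

Lemma part_eq n k X : interval_partition n k X -> forall p q u, X p u -> X q u = (q == p).
Proof.
case=> _ _ _ h4 _ p q u Xp.
apply/idP/eqP => [Xq|->//]; exact: h4 Xq Xp.
Qed.

Lemma sizes_le n k X : interval_partition n k X -> forall p q, p != q ->
  part_size n X p + part_size n X q <= n.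
Proof.
move=> hP p q pq; rewrite /part_size -count_predUI.
have -> : count (predI (X p) (X q)) (iota 1 n) = 0.
  apply/eqP; rewrite -leqn0 leqNgt -has_count; apply/hasP => -[u _] /= /andP[Xp Xq].
  by move: (@part_eq n k X hP p q u Xp) pq; rewrite Xq eq_sym => /esym/eqP ->; rewrite eqxx.
by rewrite addn0 -[X in _ <= X](size_iota 1 n) count_size.
Qed.

Lemma bad_mid n k X phi i : interval_partition n k X -> labeling n k X phi -> 1 <= i ->
  forall u v w, X i v -> 1 <= u -> u < v -> v < w -> w <= n ->
  bad phi u v w = (phi u v == i) && (phi v w == i).
Proof.
move=> hP hL i1 u v w Xv u1 uv vw wn.
have [_ h2 h3 h4 h5] := hP.
have vn : v <= n by case: (h2 _ _ Xv); lia.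
have [p Xu] := h3 u ltac:(lia).
have [q Xw] := h3 w ltac:(lia).
have pi : p <= i.
  rewrite leqNgt; apply/negP => ip; have := h5 i p v u ip Xv Xu; lia.
have iq : i <= q.
  rewrite leqNgt; apply/negP => qi; have := h5 q i w v qi Xw Xv; lia.
have [f1 f2 f3] := hL u v p i u1 uv vn Xu Xv.
have [g1 g2 g3] := hL v w i q ltac:(lia) vw wn Xv Xw.
have a1 : phi u v <= i.
  have : p = i \/ p.+1 = i \/ p.+2 <= i by lia.
  case=> [h|[h|h]]; first by rewrite f1.
    by rewrite (f3 (esym h)); case: ifP; lia.
  by have := f2 h; lia.
have a2 : i <= phi v w.
  have : i = q \/ q = i.+1 \/ i.+2 <= q by lia.
  case=> [h|[h|h]]; first by rewrite g1.
    by rewrite (g3 h); case: ifP; lia.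
  by have := g2 h; lia.
rewrite /bad; lia.
Qed.

Lemma L_pt n k X phi i : interval_partition n k X -> labeling n k X phi -> 1 <= i ->
  forall u v, X i v -> 1 <= u <= n ->
  (u < v) * (phi u v == i) = (u < v) * X i u +
     (X i.-1 u && ~~ (frac_index n X i.-1 u + frac_index n X i v <= 1)%R).
Proof.
move=> hP hL i1 u v Xv /andP[u1 un].
have [_ h2 h3 h4 h5] := hP.
have vn : v <= n by case: (h2 _ _ Xv); lia.
have [p Xu] := h3 u ltac:(lia).
rewrite (@part_eq n k X hP p i u Xu) (@part_eq n k X hP p i.-1 u Xu).
case: (ltnP u v) => uv; last first.
  case: (eqVneq i.-1 p) => ip //=.
  have := h5 p i u v ltac:(lia) Xu Xv; lia.
have pi : p <= i.
  rewrite leqNgt; apply/negP => ip; have := h5 i p v u ip Xv Xu; lia.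
have [f1 f2 f3] := hL u v p i u1 uv vn Xu Xv.
have : p = i \/ p.+1 = i \/ p.+2 <= i by lia.
case=> [h|[h|h]].
- subst p; rewrite f1 // eqxx.
  have -> : (i.-1 == i) = false by lia.
  by [].
- subst i; rewrite f3 //= eqxx.
  case: ifP => c /=; lia.
- have := f2 h.
  have -> : (i == p) = false by lia.
  have -> : (i.-1 == p) = false by lia.
  lia.
Qed.

Lemma R_pt n k X phi i : interval_partition n k X -> labeling n k X phi -> 1 <= i ->
  forall v w, X i v -> 1 <= w <= n ->
  (v < w) * (phi v w == i) = (v < w) * X i w +
     (X i.+1 w && (frac_index n X i v + frac_index n X i.+1 w <= 1)%R).
Proof.
move=> hP hL i1 v w Xv /andP[w1 wn].
have [_ h2 h3 h4 h5] := hP.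
have vn : v <= n by case: (h2 _ _ Xv); lia.
have v1 : 1 <= v by case: (h2 _ _ Xv); lia.
have [q Xw] := h3 w ltac:(lia).
rewrite (@part_eq n k X hP q i w Xw) (@part_eq n k X hP q i.+1 w Xw).
case: (ltnP v w) => vw; last first.
  case: (eqVneq i.+1 q) => iq //=.
  have := h5 i q v w ltac:(lia) Xv Xw; lia.
have iq : i <= q.
  rewrite leqNgt; apply/negP => qi; have := h5 q i w v qi Xw Xv; lia.
have [g1 g2 g3] := hL v w i q v1 vw wn Xv Xw.
have : i = q \/ q = i.+1 \/ i.+2 <= q by lia.
case=> [h|[h|h]].
- subst q; rewrite g1 // eqxx.
  have -> : (i.+1 == i) = false by lia.
  by [].
- subst q; rewrite g3 //= eqxx.
  case: ifP => c /=; lia.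
- have := g2 h.
  have -> : (i == q) = false by lia.
  have -> : (i.+1 == q) = false by lia.
  lia.
Qed.

Lemma sum_bool_count (T : Type) (r : seq T) (b : pred T) :
  \sum_(u <- r) (b u : nat) = count b r.
Proof. by elim: r => [|x r IH]; rewrite ?big_nil ?big_cons ?IH. Qed.

Lemma sum_interval a b c d : a <= b ->
  \sum_(a <= u < b) ((c <= u < d) : nat) = minn b d - maxn a c.
Proof.
move=> ab; elim: b ab => [|b IH] ab.
  rewrite big_geq //; lia.
case: (ltnP a b.+1) => h.
  rewrite big_nat_recr //= IH; last lia.
  case: (boolP (c <= b < d)) => /= hb; lia.
have -> : a = b.+1 by lia.
rewrite big_geq //; lia.
Qed.

Lemma sum_part n k X p (P : pred nat) : interval_partition n k X ->
  \sum_(1 <= u < n.+1) ((X p u && P u) : nat) =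
  count (fun r => P (part_min n X p + r)) (iota 0 (part_size n X p)).
Proof.
move=> hP.
rewrite /index_iota subSS subn0 sum_bool_count.
rewrite (@eq_count _ _ (predI P (X p))); last by move=> u /=; rewrite andbC.
rewrite -count_filter (filter_iota_interval (@iv_all n k X hP p)).
rewrite -/(part_min n X p) -/(part_size n X p).
by rewrite -{1}(addn0 (part_min n X p)) iotaDl count_map.
Qed.

Lemma count_div A B M : 0 < B ->
  count (fun r => r.+1 * B <= M) (iota 0 A) = minn A (M %/ B).
Proof.
move=> hB; elim: A => [|A IH]; first by rewrite /= min0n.
rewrite -addn1 iotaD count_cat IH /= add0n addn0.
have e : (A.+1 * B <= M) = (A.+1 <= M %/ B) by rewrite leq_divRL.
rewrite e; case: (boolP (A.+1 <= M %/ B)) => /= h; lia.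
Qed.

Lemma rat_le (x y A B : nat) : 0 < A -> 0 < B ->
  ((x%:R / A%:R + y%:R / B%:R <= 1 :> rat)%R = (x * B + y * A <= A * B)).
Proof.
move=> hA hB.
have hA' : (A%:R != 0 :> rat)%R by rewrite pnatr_eq0 -lt0n.
have hB' : (B%:R != 0 :> rat)%R by rewrite pnatr_eq0 -lt0n.
have e : (x%:R / A%:R + y%:R / B%:R = (x * B + y * A)%:R / (A * B)%:R :> rat)%R.
  rewrite natrD !natrM; field; by rewrite hA' hB'.
rewrite e ler_pdivrMr ?ltr0n ?muln_gt0 ?hA ?hB // mul1r ler_nat //.
Qed.

Lemma part_facts n k X i v : interval_partition n k X -> X i v ->
  [/\ 1 <= part_min n X i, part_min n X i <= v < part_min n X i + part_size n X i
    & part_min n X i + part_size n X i <= n.+1].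
Proof.
move=> hP Xv.
have hv := memX hP i v; rewrite Xv in hv.
have [_ h2 _ _ _] := hP.
have Xm : X i (part_min n X i) by rewrite (memX hP); lia.
have Xl : X i (part_min n X i + part_size n X i).-1 by rewrite (memX hP); lia.
case: (h2 _ _ Xm) => _ hm; case: (h2 _ _ Xl) => _ hl.
split; lia.
Qed.

Lemma L_val n k X phi i v : interval_partition n k X -> labeling n k X phi -> 1 <= i -> X i v ->
  \sum_(1 <= u < n.+1) (u < v) * (phi u v == i) =
  (v.+1 - part_min n X i).-1 + (part_size n X i.-1 -
     minn (part_size n X i.-1) ((part_size n X i - (v.+1 - part_min n X i)) *
        part_size n X i.-1 %/ part_size n X i)).
Proof.
move=> hP hL i1 Xv.
have [m1 mv mn] := part_facts hP Xv.
set m := part_min n X i in m1 mv mn *; set B := part_size n X i in mv mn *.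
set A := part_size n X i.-1; set j := v.+1 - m.
under eq_big_nat => u hu do rewrite (L_pt hP hL i1 Xv hu).
rewrite big_split /=.
have e1 : forall u, (u < v) * X i u = ((m <= u < v) : nat).
  move=> u; rewrite (memX hP i u) -/m -/B.
  case: (ltnP u v) => h; case: (boolP (m <= u)) => h' /=; lia.
rewrite (eq_bigr _ (fun u _ => e1 u)) sum_interval // (@sum_part n k X i.-1 (fun u => ~~ (frac_index n X i.-1 u + frac_index n X i v <= 1)%R) hP).
rewrite -/A.
have jB : j <= B by rewrite /j; lia.
have e2 : count (fun r => ~~ (frac_index n X i.-1 (part_min n X i.-1 + r) + frac_index n X i v <= 1)%R)
   (iota 0 A) = count (predC (fun r => r.+1 * B <= (B - j) * A)) (iota 0 A).
  apply: eq_in_count => r; rewrite mem_iota => hr /=.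
  rewrite /frac_index -/A -/m -/B -/j.
  rewrite (_ : (part_min n X i.-1 + r).+1 - part_min n X i.-1 = r.+1); last lia.
  rewrite rat_le; [|lia|lia]; congr negb.
  rewrite mulnBl; apply/idP/idP; nia.
rewrite e2.
have := count_predC (fun r => r.+1 * B <= (B - j) * A) (iota 0 A).
rewrite count_div; last lia.
rewrite size_iota /j; lia.
Qed.

Lemma R_val n k X phi i v : interval_partition n k X -> labeling n k X phi -> 1 <= i -> X i v ->
  \sum_(1 <= w < n.+1) (v < w) * (phi v w == i) =
  (part_size n X i - (v.+1 - part_min n X i)) + minn (part_size n X i.+1)
     ((part_size n X i - (v.+1 - part_min n X i)) * part_size n X i.+1 %/ part_size n X i).
Proof.
move=> hP hL i1 Xv.
have [m1 mv mn] := part_facts hP Xv.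
set m := part_min n X i in m1 mv mn *; set B := part_size n X i in mv mn *.
set C := part_size n X i.+1; set j := v.+1 - m.
under eq_big_nat => u hu do rewrite (R_pt hP hL i1 Xv hu).
rewrite big_split /=.
have e1 : forall u, (v < u) * X i u = ((v.+1 <= u < m + B) : nat).
  move=> u; rewrite (memX hP i u) -/m -/B.
  case: (ltnP v u) => h; case: (boolP (m <= u)) => h' /=; lia.
rewrite (eq_bigr _ (fun u _ => e1 u)) sum_interval //.
rewrite (@sum_part n k X i.+1 (fun u => (frac_index n X i v + frac_index n X i.+1 u <= 1)%R) hP).
rewrite -/C.
have jB : j <= B by rewrite /j; lia.
have e2 : count (fun r => (frac_index n X i v + frac_index n X i.+1 (part_min n X i.+1 + r) <= 1)%R)
   (iota 0 C) = count (fun r => r.+1 * B <= (B - j) * C) (iota 0 C).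
  apply: eq_in_count => r; rewrite mem_iota => hr /=.
  rewrite /frac_index -/C -/m -/B -/j.
  rewrite (_ : (part_min n X i.+1 + r).+1 - part_min n X i.+1 = r.+1); last lia.
  rewrite rat_le; [|lia|lia].
  rewrite mulnBl; apply/idP/idP; nia.
rewrite e2 count_div; last lia.
rewrite /j; lia.
Qed.

Lemma widen1 a N (F : nat -> nat) : 1 <= a ->
  \sum_(a <= x < N) F x = \sum_(1 <= x < N) (a <= x) * F x.
Proof.
move=> a1; rewrite (big_nat_widenl a 1 N xpredT F a1) big_mkcond /=.
by apply: eq_bigr => x _; case: (a <= x); rewrite ?mul1n ?mul0n.
Qed.

Lemma nbad_decomp n k X phi i : interval_partition n k X -> labeling n k X phi -> 1 <= i ->
  nbad_mid n X phi i = \sum_(1 <= v < n.+1) X i v *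
    ((\sum_(1 <= u < n.+1) (u < v) * (phi u v == i)) *
     (\sum_(1 <= w < n.+1) (v < w) * (phi v w == i))).
Proof.
move=> hP hL i1; rewrite /nbad_mid.
rewrite (@eq_big_nat _ _ _ 1 n.+1 _ (fun u => \sum_(1 <= v < n.+1) \sum_(1 <= w < n.+1)
    (u < v) * ((v < w) * (X i v && bad phi u v w)))); last first.
  move=> u hu; rewrite widen1; last lia.
  apply: eq_bigr => v _; rewrite widen1; last lia.
  by rewrite big_distrr.
rewrite exchange_big_nat /=.
apply: eq_big_nat => v hv.
case: (boolP (X i v)) => Xv; last first.
  rewrite mul0n big1 // => u _; rewrite big1 // => w _; by rewrite andFb !muln0.
rewrite mul1n big_distrl /=; apply: eq_big_nat => u hu; rewrite big_distrr /=.
apply: eq_big_nat => w hw /=.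
case: (ltnP u v) => uv; last by rewrite !mul0n.
case: (ltnP v w) => vw; last by rewrite !mul0n !muln0.
rewrite (bad_mid hP hL i1 Xv); try lia.
Qed.

Lemma pw A B C j : 0 < B -> 1 <= j <= B ->
  let L := j.-1 + (A - minn A ((B - j) * A %/ B)) in
  let R := (B - j) + minn C ((B - j) * C %/ B) in
  B * B * (L * R) <= (j * (A + B)) * ((B - j) * (B + C)) /\
  (j * (A + B)) * ((B - j) * (B + C)) <=
     B * B * (L * R) + B * (j * (A + B) + (B - j) * (B + C) + B).
Proof.
move=> B0 jB L R; rewrite /L /R; clear L R.
set q1 := (B - j) * A %/ B; set q2 := (B - j) * C %/ B.
have d1 : q1 * B <= (B - j) * A by apply: leq_trunc_div.
have d2 : (B - j) * A < q1.+1 * B by apply: ltn_ceil.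
have d3 : q2 * B <= (B - j) * C by apply: leq_trunc_div.
have d4 : (B - j) * C < q2.+1 * B by apply: ltn_ceil.
clearbody q1 q2.
Timeout 15 have jA : j * A <= B * A by rewrite leq_mul2r; apply/orP; right; lia.
Timeout 15 have jC : j * C <= B * C by rewrite leq_mul2r; apply/orP; right; lia.
rewrite mulnBl in d1 d2 d3 d4.
rewrite mulSn in d2 d4.
have hq1 : q1 <= A.
  Timeout 15 have : q1 * B <= A * B by lia.
  Timeout 15 by rewrite leq_mul2r; case/orP => //; lia.
have hq2 : q2 <= C.
  Timeout 15 have : q2 * B <= C * B by lia.
  Timeout 15 by rewrite leq_mul2r; case/orP => //; lia.
rewrite (minn_idPr hq1) (minn_idPr hq2).
set L := j.-1 + (A - q1); set R := (B - j) + q2.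
have eL : L = j.-1 + (A - q1) by [].
have eR : R = (B - j) + q2 by [].
clearbody L R.
have bq1 : B * q1 <= B * A by rewrite leq_mul2l hq1 orbT.
set x := j * (A + B); set y := (B - j) * (B + C).
have ex : x = j * A + j * B by rewrite /x mulnDr.
Timeout 15 have ey : y = B * B + B * C - j * B - j * C by rewrite /y mulnBl !mulnDr subnDA.
Timeout 15 have jBB : j * B <= B * B by rewrite leq_mul2r; apply/orP; right; lia.
have Bj : B <= B * j by rewrite leq_pmulr //; lia.
have eBL : B * L = B * j - B + B * A - B * q1.
  Timeout 15 rewrite eL mulnDr mulnBr -subn1 mulnBr muln1; lia.
have eBR : B * R = B * B - B * j + B * q2 by rewrite eR mulnDr mulnBr.
Timeout 15 have h1 : B * L <= x by rewrite eBL ex; lia.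
Timeout 15 have h2 : x <= B * L + B by rewrite eBL ex; lia.
Timeout 15 have h3 : B * R <= y by rewrite eBR ey; lia.
Timeout 15 have h4 : y <= B * R + B by rewrite eBR ey; lia.
have e : B * B * (L * R) = (B * L) * (B * R) by ring.
rewrite e; split; first exact: leq_mul.
have := leq_mul h2 h4.
move: h1 h3; set bl := B * L; set br := B * R => h1 h3 h5.
apply: (leq_trans h5).
have : B * bl <= B * x by rewrite leq_mul2l h1 orbT.
have : B * br <= B * y by rewrite leq_mul2l h3 orbT.
Timeout 15 rewrite !mulnDr !mulnDl; lia.
Qed.

Lemma sum_j B : 2 * \sum_(r < B) r.+1 = B * B.+1.
Proof.
elim: B => [|B IH]; first by rewrite big_ord0.
rewrite big_ord_recr /= mulnDr IH; lia.
Qed.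

Lemma sum_jBj B : 6 * \sum_(r < B) r.+1 * (B - r.+1) + B = B ^ 3.
Proof.
elim: B => [|B IH]; first by rewrite big_ord0.
rewrite big_ord_recr /= subnn muln0 addn0.
have e : \sum_(r < B) r.+1 * (B.+1 - r.+1) =
   \sum_(r < B) r.+1 * (B - r.+1) + \sum_(r < B) r.+1.
  rewrite -big_split /=; apply: eq_bigr => r _.
  have hr := ltn_ord r.
  rewrite subSS (_ : B - r = (B - r.+1).+1); last lia.
  by rewrite mulnS addnC.
rewrite e mulnDr.
have := sum_j B.
move: IH; set S := \sum_(r < B) _; set T := \sum_(r < B) _ => IH hT.
have e3 : B.+1 ^ 3 = B ^ 3 + 3 * (B * B.+1) + 1.
  rewrite !expnS expn0; ring.
rewrite e3; lia.
Qed.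

Definition gfun A B C j :=
  (j.-1 + (A - minn A ((B - j) * A %/ B))) * ((B - j) + minn C ((B - j) * C %/ B)).

Lemma final A B C n : A + B <= n -> B + C <= n ->
  6 * (\sum_(r < B) gfun A B C r.+1) <= (A + B) * B * (B + C) /\
  (A + B) * B * (B + C) <= 6 * (\sum_(r < B) gfun A B C r.+1) + 19 * n ^ 2.
Proof.
move=> hAB hBC.
case: (posnP B) => [->|B0]; first by rewrite big_ord0 !muln0 mul0n.
set G := \sum_(r < B) _.
set S := \sum_(r < B) r.+1 * (B - r.+1).
have hS := sum_jBj B; rewrite -/S in hS.
set P := (A + B) * (B + C).
have eXY : \sum_(r < B) (r.+1 * (A + B)) * ((B - r.+1) * (B + C)) = P * S.
  rewrite /S big_distrr /=; apply: eq_bigr => r _; rewrite /P; ring.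
have up : B * B * G <= P * S.
  rewrite -eXY /G big_distrr /=; apply: leq_sum => r _.
  have hr := ltn_ord r.
  have hj : 1 <= r.+1 <= B by lia.
  by have [] := pw A C B0 hj.
have lo : P * S <= B * B * G + B * (B * (3 * (B * n))).
  rewrite -eXY /G big_distrr /=.
  have -> : B * (B * (3 * (B * n))) = \sum_(r < B) B * (3 * (B * n)).
    by rewrite sum_nat_const card_ord.
  rewrite -big_split /=; apply: leq_sum => r _.
  have hr := ltn_ord r.
  have hj : 1 <= r.+1 <= B by lia.
  have [_ h2] := pw A C B0 hj.
  apply: (leq_trans h2); rewrite leq_add2l leq_mul2l; apply/orP; right.
  have : r.+1 * (A + B) <= B * n by apply: leq_mul; lia.
  have : (B - r.+1) * (B + C) <= B * n by apply: leq_mul; lia.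
  have : B <= B * n by rewrite leq_pmulr //; lia.
  lia.
have hB2 : 0 < B * B by rewrite muln_gt0 B0.
have eP : (A + B) * B * (B + C) = P * B by rewrite /P; ring.
rewrite eP; split.
  rewrite -(leq_pmul2l hB2).
  have : B * B * (P * B) = P * B ^ 3 by rewrite expnS expnS expn1; ring.
  move=> ->; rewrite -hS mulnDr.
  have : B * B * (6 * G) = 6 * (B * B * G) by ring.
  move=> ->.
  have : 6 * (B * B * G) <= 6 * (P * S) by rewrite leq_mul2l up orbT.
  have : P * (6 * S) = 6 * (P * S) by ring.
  lia.
rewrite -(leq_pmul2l hB2).
have : B * B * (P * B) = P * B ^ 3 by rewrite expnS expnS expn1; ring.
move=> ->; rewrite -hS mulnDr.
have e6 : P * (6 * S) = 6 * (P * S) by ring.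
have : 6 * (P * S) <= 6 * (B * B * G + B * (B * (3 * (B * n)))) by rewrite leq_mul2l lo orbT.
have hPn : P <= n * n by apply: leq_mul.
have : P * B <= n * n * B by rewrite leq_mul2r hPn orbT.
have : B * (B * (3 * (B * n))) * 6 <= 18 * (B * B * (n * n)).
  have : B * B * B * n <= B * B * n * n.
    by apply: leq_mul => //; apply: leq_mul => //; lia.
  have e1 : B * (B * (3 * (B * n))) * 6 = 18 * (B * B * B * n) by ring.
  have e2 : B * B * (n * n) = B * B * n * n by ring.
  lia.
have : n * n * B <= B * B * (n * n).
  have e3 : n * n * B = B * 1 * (n * n) by ring.
  rewrite e3 leq_mul2r; apply/orP; right; rewrite leq_mul2l; apply/orP; right; lia.
have e4 : B * B * (6 * G + 19 * n ^ 2) = 6 * (B * B * G) + 19 * (B * B * (n * n)).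
  rewrite expnS expn1; ring.
rewrite e4 e6.
lia.
Qed.

Lemma sum_filter_mul (r : seq nat) (b : pred nat) (F : nat -> nat) :
  \sum_(v <- r) b v * F v = \sum_(v <- seq.filter b r) F v.
Proof.
elim: r => [|x r IH]; first by rewrite !big_nil.
rewrite /= big_cons; case: (b x) => /=; by rewrite ?big_cons IH ?mul1n ?mul0n.
Qed.

Lemma sum_iota0 B (F : nat -> nat) : \sum_(r <- iota 0 B) F r = \sum_(r < B) F r.
Proof. by rewrite -(big_mkord xpredT) /index_iota subn0. Qed.

Lemma N_formula n k X phi i : interval_partition n k X -> labeling n k X phi -> 1 <= i ->
  nbad_mid n X phi i = \sum_(r < part_size n X i)
     gfun (part_size n X i.-1) (part_size n X i) (part_size n X i.+1) r.+1.
Proof.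
move=> hP hL i1; rewrite (nbad_decomp hP hL i1).
set A := part_size n X i.-1; set B := part_size n X i; set C := part_size n X i.+1.
set m := part_min n X i.
rewrite (eq_bigr (fun v => X i v * gfun A B C (v.+1 - m))); last first.
  move=> v _; case: (boolP (X i v)) => Xv; last by rewrite !mul0n.
  by rewrite (L_val hP hL i1 Xv) (R_val hP hL i1 Xv).
rewrite /index_iota subSS subn0 sum_filter_mul (filter_iota_interval (@iv_all n k X hP i)).
rewrite -/(part_min n X i) -/(part_size n X i) -/m -/B.
rewrite -{1}(addn0 m) iotaDl big_map sum_iota0.
apply: eq_bigr => r _; congr gfun; lia.
Qed.

Lemma comb n k X phi i : interval_partition n k X -> labeling n k X phi -> 1 <= i ->
  6 * nbad_mid n X phi i <= (part_size n X i.-1 + part_size n X i) * part_size n X i *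
      (part_size n X i + part_size n X i.+1) /\
  (part_size n X i.-1 + part_size n X i) * part_size n X i *
      (part_size n X i + part_size n X i.+1) <= 6 * nbad_mid n X phi i + 19 * n ^ 2.
Proof.
move=> hP hL i1; rewrite (N_formula hP hL i1); apply: final.
  by rewrite (sizes_le hP) //; lia.
by rewrite (sizes_le hP) //; lia.
Qed.

Import numFieldNormedType.Exports.
Local Open Scope ring_scope.
Local Open Scope classical_set_scope.

Lemma inv_n_cvg0 (R : realType) : (fun n : nat => (n%:R : R)^-1) @ \oo --> 0.
Proof.
rewrite -(cvg_shiftn 1).
have -> : [sequence (((n + 1)%N)%:R : R)^-1]_n = harmonic.
  by apply/funext => n /=; rewrite addn1.
exact: cvg_harmonic.
Qed.

Lemma bin3E n : (6 * 'C(n, 3) = n * (n - 1) * (n - 2))%N.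
Proof.
have h3 := mul_bin_left n 2. have h2 := mul_bin_left n 1.
rewrite bin1 in h2. nia.
Qed.

Lemma analytic (R : realType) (A B C N : nat -> nat) (a b c : R) :
  (fun n => (A n)%:R / n%:R : R) @ \oo --> a ->
  (fun n => (B n)%:R / n%:R : R) @ \oo --> b ->
  (fun n => (C n)%:R / n%:R : R) @ \oo --> c ->
  (forall n, 6 * N n <= (A n + B n) * B n * (B n + C n))%N ->
  (forall n, (A n + B n) * B n * (B n + C n) <= 6 * N n + 19 * n ^ 2)%N ->
  (fun n => (N n)%:R / ('C(n, 3))%:R : R) @ \oo --> (a + b) * b * (b + c).
Proof.
move=> hA hB hC hU hL.
have hAB : (fun n => (A n + B n)%:R / n%:R : R) @ \oo --> a + b.
  under eq_fun => n do rewrite natrD mulrDl.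
  exact: cvgD.
have hBC : (fun n => (B n + C n)%:R / n%:R : R) @ \oo --> b + c.
  under eq_fun => n do rewrite natrD mulrDl.
  exact: cvgD.
have hP : (fun n => (A n + B n)%:R / n%:R * ((B n)%:R / n%:R) *
             ((B n + C n)%:R / n%:R) : R) @ \oo --> (a + b) * b * (b + c).
  by apply: cvgM; [apply: cvgM|].
have hE : (fun n => 19 * (n%:R : R)^-1) @ \oo --> 0.
  rewrite -(mulr0 (19 : R)); apply: cvgM; [exact: cvg_cst| exact: inv_n_cvg0].
have hg : (fun n => 6 * (N n)%:R / (n%:R : R) ^+ 3) @ \oo --> (a + b) * b * (b + c).
  apply: (@squeeze_cvgr _ _ _ _ (fun n => (A n + B n)%:R / n%:R * ((B n)%:R / n%:R) *
             ((B n + C n)%:R / n%:R) - 19 * (n%:R : R)^-1)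
         (fun n => (A n + B n)%:R / n%:R * ((B n)%:R / n%:R) *
             ((B n + C n)%:R / n%:R))); last first.
  - exact: hP.
  - by rewrite -[X in _ --> X]subr0; apply: cvgB.
  near=> n.
  have n1 : (1 <= n)%N by near: n; apply: nbhs_infty_ge.
  have xn0 : (n%:R : R) != 0 by rewrite pnatr_eq0; lia.
  have xgt0 : (0 : R) < n%:R by rewrite ltr0n; lia.
  have key : forall u v : R, u <= v -> u / (n%:R : R) ^+ 3 <= v / (n%:R) ^+ 3.
    move=> u v uv; apply: ler_wpM2r => //.
    all: try by [].
  have H1 : ((6 * N n)%:R : R) <= ((A n + B n) * B n * (B n + C n))%:R by rewrite ler_nat.
  have H2 : (((A n + B n) * B n * (B n + C n))%:R : R) <= (6 * N n + 19 * n ^ 2)%:R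
    by rewrite ler_nat.
  rewrite !natrM !natrD !natrX in H1 H2.
  rewrite !natrD.
  apply/andP; split.
    have -> : ((A n)%:R + (B n)%:R) / n%:R * ((B n)%:R / n%:R) * (((B n)%:R + (C n)%:R) / n%:R)
       - 19 * (n%:R : R)^-1 = (((A n)%:R + (B n)%:R) * (B n)%:R * ((B n)%:R + (C n)%:R)
        - 19 * (n%:R) ^+ 2) / (n%:R) ^+ 3 by field.
    apply: key; lra.
  have -> : ((A n)%:R + (B n)%:R) / n%:R * ((B n)%:R / n%:R) * (((B n)%:R + (C n)%:R) / n%:R)
      = (((A n)%:R + (B n)%:R) * (B n)%:R * ((B n)%:R + (C n)%:R)) / (n%:R : R) ^+ 3 by field.
  apply: key; lra.
have hy := @inv_n_cvg0 R.
have h1 : (fun n => 1 - (n%:R : R)^-1) @ \oo --> (1 - 0 : R).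
  by apply: cvgB => //; exact: cvg_cst.
have h2 : (fun n => 1 - 2 * (n%:R : R)^-1) @ \oo --> (1 - 2 * 0 : R).
  by apply: cvgB; [exact: cvg_cst| apply: cvgM; [exact: cvg_cst|exact: hy]].
have h12 : (fun n => (1 - (n%:R : R)^-1) * (1 - 2 * (n%:R : R)^-1)) @ \oo --> (1 : R).
  have e : (1 - 0) * (1 - 2 * 0) = (1:R) by rewrite mulr0 subr0 mulr1.
  rewrite -[X in _ --> X]e.
  by apply: cvgM; [exact: h1|exact: h2].
have hq : (fun n => ((1 - (n%:R : R)^-1) * (1 - 2 * (n%:R : R)^-1))^-1) @ \oo --> (1 : R).
  have := cvgV (oner_neq0 R) h12; rewrite invr1; exact.
have hgq : (fun n => 6 * (N n)%:R / (n%:R : R) ^+ 3 *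
   ((1 - (n%:R : R)^-1) * (1 - 2 * (n%:R : R)^-1))^-1) @ \oo --> (a + b) * b * (b + c).
  rewrite -[X in _ --> X]mulr1; exact: cvgM.
apply: cvg_trans hgq; apply: near_eq_cvg; near=> n.
have n3 : (3 <= n)%N by near: n; apply: nbhs_infty_ge.
have hb := bin3E n.
have hbr : (6 * ('C(n, 3))%:R : R) = n%:R * (n%:R - 1) * (n%:R - 2).
  have := congr1 (fun m => (m%:R : R)) hb; rewrite /= !natrM natrB; last lia.
  by rewrite natrB; last lia.
have xn0 : (n%:R : R) != 0 by rewrite pnatr_eq0; lia.
have x1 : (n%:R : R) - 1 != 0.
  have : ((n:nat)%:R : R) != (1%N)%:R by rewrite eqr_nat; lia.
  by apply: contra_neq => h; lra.
have x2 : (n%:R : R) - 2 != 0.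
  have : ((n:nat)%:R : R) != (2%N)%:R by rewrite eqr_nat; lia.
  by apply: contra_neq => h; lra.
have -> : (('C(n, 3))%:R : R) = n%:R * (n%:R - 1) * (n%:R - 2) / 6.
  by rewrite -hbr; field.
rewrite /=.
by field; rewrite x1 x2 xn0.
Unshelve. all: end_near.
Qed.

Theorem lemma4p4 (R : realType) (k i : nat) (a b c : R)
  (X : nat -> nat -> nat -> bool) (phi : nat -> nat -> nat -> nat) :
  (1 <= k)%N -> (1 <= i <= k)%N -> 0 <= a -> 0 <= b -> 0 <= c ->
  (forall n, interval_partition n k (X n)) ->
  (forall n, labeling n k (X n) (phi n)) ->
  (fun n : nat => (part_size n (X n) i.-1)%:R / n%:R : R) @ \oo --> a ->
  (fun n : nat => (part_size n (X n) i)%:R / n%:R : R) @ \oo --> b ->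
  (fun n : nat => (part_size n (X n) i.+1)%:R / n%:R : R) @ \oo --> c ->
  (fun n : nat => (nbad_mid n (X n) (phi n) i)%:R / ('C(n, 3))%:R : R)
    @ \oo --> (a + b) * b * (b + c).
Proof.
move=> k1 /andP[i1 ik] a0 b0 c0 hP hL hA hB hC.
apply: (@analytic R (fun n => part_size n (X n) i.-1) (fun n => part_size n (X n) i)
   (fun n => part_size n (X n) i.+1) (fun n => nbad_mid n (X n) (phi n) i) a b c hA hB hC).
  by move=> n; have [] := comb (hP n) (hL n) i1.
by move=> n; have [] := comb (hP n) (hL n) i1.
Qed.
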